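(* Let $K$ be a clique simplicial complex, $X\cup Y=K_0$ a cover of its vertex set, $A:=X\cap Y$, and $P:=\{\sigma\in K\mid\sigma\subset X\text{ or }\sigma\subset Y\text{ or }\sigma\cap A\neq\emptyset\}$. Assume one of the following: (1) there is a vertex $v$ in $\bigcap_{\tau\in K_1\setminus P}\mathrm{St}(\tau,A)$ such that, for every edge $\tau\in K_1\setminus P$ and every vertex $w$ of $\mathrm{St}(\tau,A)$, $\{v,w\}$ is a simplex of $K$; (2) there is a vertex $v$ in $\bigcap_{\tau\in K_1\setminus P}\mathrm{St}(\tau,A)$ such that, for every edge $\tau\in K_1\setminus P$, $v$ is a central vertex of $\mathrm{St}(\tau,A)$; (3) there is $v\in A$ such that for every simplex $\tau$ of $K$ with $|\tau\cap(X\setminus A)|=1$, $|\tau\cap(Y\setminus A)|=1$ and $|\tau\cap A|\le1$, the set $\tau\cup\{v\}$ is a simplex of $K$. Then the inclusion $K_X\cup K_Y\hookrightarrow K$ is a weak equivalence.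
   Context: A simplicial complex is a collection of finite nonempty subsets of a fixed set closed under taking nonempty subsets; $K_0$ is its vertex set, $K_1$ its set of edges, $K_B$ the subcomplex of simplices contained in $B$. $K$ is clique if a set with at least two elements is a simplex iff all its two-element subsets are simplices. $\mathrm{St}(\sigma,A):=\{\mu\subset A\mid 0<|\mu|<\infty,\ \mu\cup\sigma\in K\}$. A simplex $\tau$ of a complex $L$ is central if $\sigma\cup\tau\in L$ for every simplex $\sigma$ of $L$; a vertex $v$ is central if $\{v\}$ is. Homotopical notions refer to geometric realizations. *)

(* Defs.v *)
From HB Require Import structures.
From mathcomp Require Import all_boot all_order all_algebra.
From mathcomp Require Import all_classical all_reals all_analysis.
Set Implicit Arguments.
Unset Strict Implicit.
Unset Printing Implicit Defensive.
Import Order.TTheory GRing.Theory Num.Theory.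
Import numFieldTopology.Exports.
Local Open Scope classical_set_scope.
Local Open Scope ring_scope.

Definition simplicial_complex (V : Type) (K : set (set V)) : Prop :=
  (forall s, K s -> finite_set s /\ s !=set0) /\
  (forall s t, K s -> t `<=` s -> t !=set0 -> K t).

Definition vertices (V : Type) (K : set (set V)) : set V :=
  [set v | K [set v]].

Definition is_pair (V : Type) (s : set V) : Prop :=
  exists a b, a <> b /\ s = [set a; b].

Definition edges (V : Type) (K : set (set V)) : set (set V) :=
  [set s | K s /\ is_pair s].

Definition clique (V : Type) (K : set (set V)) : Prop :=
  forall s, finite_set s -> (exists a b, s a /\ s b /\ a <> b) ->
    (K s <-> forall a b, s a -> s b -> a <> b -> K [set a; b]).

Definition full_sub (V : Type) (K : set (set V)) (B : set V) : set (set V) :=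
  [set s | K s /\ s `<=` B].

Definition St (V : Type) (K : set (set V)) (sigma A : set V) : set (set V) :=
  [set mu | mu `<=` A /\ mu !=set0 /\ finite_set mu /\ K (mu `|` sigma)].

Definition central_vertex (V : Type) (L : set (set V)) (v : V) : Prop :=
  forall s, L s -> L (s `|` [set v]).

Definition is_singleton (V : Type) (S : set V) : Prop := exists x, S = [set x].
Definition at_most_one (V : Type) (S : set V) : Prop :=
  forall x y, S x -> S y -> x = y.

Unset Implicit Arguments.
Section Realization.
Variables (R : realType) (V : choiceType).

Definition supp (f : V -> R) : set V := [set v | f v != 0].

Definition gsimplex (sigma : set V) : set (V -> R) :=
  [set f | (forall v, 0 <= f v) /\ supp f `<=` sigma /\
           (\sum_(v \in sigma) f v)%R = 1].

Definition realization (K : set (set V)) : set (V -> R) :=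
  [set f | exists2 s, K s & gsimplex s f].

(* U is open in |K| for the coherent (weak) topology: U meets every closed
   simplex in a relatively open subset (|sigma| carries the Euclidean =
   product topology inherited from R^V) *)
Definition coherent_open (K : set (set V)) (U : set (V -> R)) : Prop :=
  U `<=` realization K /\
  forall s, K s -> exists W : set {ptws V -> R},
      open W /\ U `&` gsimplex s = W `&` gsimplex s.

Definition cont_on {Z : topologicalType} (K : set (set V)) (D : set Z)
    (g : Z -> V -> R) : Prop :=
  (forall z, D z -> realization K (g z)) /\
  forall U, coherent_open K U ->
    exists O : set Z, open O /\ g @^-1` U `&` D = O `&` D.

Definition usphere (n : nat) : set 'rV[R]_n.+1 :=
  [set s | (\sum_(i < n.+1) s ord0 i ^+ 2) = 1].

Definition sbase (n : nat) : 'rV[R]_n.+1 := \row_(i < n.+1) (i == ord0)%:R.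

Definition pointed_map (K : set (set V)) (n : nat) (x : V -> R)
    (g : 'rV[R]_n.+1 -> V -> R) : Prop :=
  cont_on K (usphere n) g /\ g (sbase n) = x.

Definition phomotopic (K : set (set V)) (n : nat) (x : V -> R)
    (g1 g2 : 'rV[R]_n.+1 -> V -> R) : Prop :=
  exists H : ('rV[R]_n.+1 * R)%type -> V -> R,
    cont_on K (usphere n `*` (`[0, 1]%classic : set R)) H /\
    (forall s, usphere n s -> H (s, 0) = g1 s /\ H (s, 1) = g2 s) /\
    (forall t : R, `[0, 1]%classic t -> H (sbase n, t) = x).

(* the inclusion |L| -> |K| (L a subcomplex of K) induces a bijection
   pi_n(|L|, x) -> pi_n(|K|, x) for every n >= 0 and every x in |L|
   (pi_n = pointed homotopy classes of pointed maps from S^n; n = 0 gives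
   pi_0) *)
Definition incl_weak_equivalence (L K : set (set V)) : Prop :=
  forall (n : nat) (x : V -> R), realization L x ->
    (forall g, pointed_map K n x g ->
       exists2 h, pointed_map L n x h & phomotopic K n x h g) /\
    (forall h1 h2, pointed_map L n x h1 -> pointed_map L n x h2 ->
       phomotopic K n x h1 h2 -> phomotopic L n x h1 h2).

End Realization.
Arguments incl_weak_equivalence R {V} L K.

(* Main.v *)
Require Import Defs.
From HB Require Import structures.
From mathcomp Require Import all_boot all_order all_algebra.
From mathcomp Require Import all_classical all_reals all_analysis.
From mathcomp Require Import ring lra.
Import Order.TTheory GRing.Theory Num.Theory.
Import numFieldTopology.Exports.
Local Open Scope classical_set_scope.
Local Open Scope ring_scope.

Lemma tube_open (R : realType) (T U : topologicalType) (Phi : T * R -> U)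
  (J : set R) (W : set U) : continuous Phi -> compact J -> open W ->
  open [set x | forall t, J t -> W (Phi (x, t))].
Proof.
move=> cPhi cJ oW; rewrite openE => x0 Hx0.
have := (compact_near_coveringP J).1 cJ T (nbhs x0) (fun x t => W (Phi (x, t))) _.
apply => t Jt.
have : nbhs (x0, t) (Phi @^-1` W).
  by apply: cPhi; apply: open_nbhs_nbhs; split => //; exact: Hx0.
case=> [[A B]] /= [nA nB] AB.
exists (B, A) => //= -[t' x] [/= Bt Ax]; exact: (AB (x, t')).
Qed.

Lemma local_relopen (T : topologicalType) (S D : set T) :
  (forall p, S p -> D p -> exists B, open B /\ B p /\ (B `&` D `<=` S)) ->
  exists O, open O /\ S `&` D = O `&` D.
Proof.
move=> H; exists [set p | exists B, open B /\ B p /\ B `&` D `<=` S]; split.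
  rewrite openE => p [B [oB [Bp BS]]]; idtac.
  rewrite /interior /=; apply: (@filterS _ _ _ B); first by move=> q Bq; exists B.
  exact: oB.
apply/seteqP; split => p [Sp Dp]; split => //.
  by have := H p Sp Dp.
by case: Sp => B [_ [Bp BS]]; apply: BS.
Qed.

Lemma ptws_cont (R : realType) (T : topologicalType) (V : choiceType)
  (g : T -> {ptws V -> R}) : (forall w, continuous (fun x => g x w)) -> continuous g.
Proof.
move=> H x.
apply: (proj2 (@pointwise_cvgP (discrete_topology V) R (g @ nbhs x) (g x) _)).
move=> w; exact: H.
Qed.

Lemma proj_cont (R : realType) (V : choiceType) (w : V) :
  continuous (fun f : {ptws V -> R} => f w).
Proof.
move=> f.
apply: (proj1 (@pointwise_cvgP (discrete_topology V) R (nbhs f) f _)).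
exact: cvg_id.
Qed.

Lemma cont_sum_seq (R : realType) (T : topologicalType) (I : Type) (l : seq I)
  (G : I -> T -> R) : (forall i, continuous (G i)) ->
  continuous (fun x => \sum_(i <- l) G i x).
Proof.
move=> cG; elim: l => [|i l IH].
  by under eq_fun do rewrite big_nil; exact: cst_continuous.
under eq_fun do rewrite big_cons.
by move=> x; apply: continuousD; [exact: cG | exact: IH].
Qed.

Set Implicit Arguments.
Unset Strict Implicit.
Section Retr.
Variables (R : realType) (V : choiceType) (X Y : set V) (v : V).
Local Notation XA := (X `\` (X `&` Y)).
Local Notation YA := (Y `\` (X `&` Y)).

Definition sA (D : set V) (f : V -> R) := \sum_(w \in D `&` XA) f w.
Definition sB (D : set V) (f : V -> R) := \sum_(w \in D `&` YA) f w.
Definition mm (D : set V) (f : V -> R) :=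
  \sum_(u \in D `&` XA) Num.min (f u) (sB D f) +
  \sum_(u \in D `&` YA) Num.min (f u) (sA D f).
Definition rD (D : set V) (f : V -> R) : V -> R := fun w =>
  if w == v then f v + mm D f
  else if w \in XA then Num.max 0 (f w - sB D f)
  else if w \in YA then Num.max 0 (f w - sA D f) else f w.
Definition DmD (D : set V) (p : (V -> R) * R) : V -> R :=
  fun w => (1 - p.2) * rD D p.1 w + p.2 * p.1 w.

Definition nonneg (f : V -> R) := forall w, 0 <= f w.

Lemma sA_ge0 D f : nonneg f -> 0 <= sA D f.
Proof. by move=> nf; apply: fsumr_ge0 => w _. Qed.
Lemma sB_ge0 D f : nonneg f -> 0 <= sB D f.
Proof. by move=> nf; apply: fsumr_ge0 => w _. Qed.

Lemma mm_ge0 D f : nonneg f -> 0 <= mm D f.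
Proof.
move=> nf; apply: addr_ge0; apply: fsumr_ge0 => w _;
  by rewrite le_min nf ?sA_ge0 ?sB_ge0.
Qed.

Lemma rD_ge0 D f : nonneg f -> nonneg (rD D f).
Proof.
move=> nf w; rewrite /rD; case: ifP => _; first by rewrite addr_ge0 ?mm_ge0.
by case: ifP => _; [rewrite le_max lexx | case: ifP => _; rewrite ?le_max ?lexx].
Qed.

Lemma sA_widen D f : (forall w, ~ D w -> f w = 0) -> sA setT f = sA D f.
Proof.
move=> Df; rewrite /sA; apply/esym/fsbig_widen; first by move=> w [_ ?].
by move=> w [[_ xa] /not_andP [nD|//]]; exact: Df.
Qed.
Lemma sB_widen D f : (forall w, ~ D w -> f w = 0) -> sB setT f = sB D f.
Proof.
move=> Df; rewrite /sB; apply/esym/fsbig_widen; first by move=> w [_ ?].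
by move=> w [[_ xa] /not_andP [nD|//]]; exact: Df.
Qed.

Lemma min0l (a : R) : 0 <= a -> Num.min 0 a = 0.
Proof. by move=> a0; rewrite /Num.min; case: ifP => //; rewrite lt_neqAle a0 andbT => /negbFE/eqP. Qed.

Lemma mm_widen D f : nonneg f -> (forall w, ~ D w -> f w = 0) -> mm setT f = mm D f.
Proof.
move=> nf Df; rewrite /mm -sA_widen // -sB_widen //; congr (_ + _);
  apply/esym/fsbig_widen; (try by move=> w [_ ?]);
  by move=> w [[_ xa] /not_andP [nD|//]]; rewrite /= Df // min0l ?sA_ge0 ?sB_ge0.
Qed.

Lemma rD_widen D f : nonneg f -> (forall w, ~ D w -> f w = 0) ->
  rD setT f = rD D f.
Proof.
by move=> nf Df; rewrite /rD -sA_widen // -sB_widen // -mm_widen.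
Qed.



Lemma rD_idY D f : nonneg f -> (forall w, YA w -> f w = 0) -> rD D f = f.
Proof.
move=> nf fY; have sB0 : sB D f = 0 by apply: fsbig1 => w [_ /fY].
have mm0 : mm D f = 0.
  rewrite /mm sB0 !fsbig1 ?addr0 // => w [_ Hw].
    by rewrite fY // min_l // sA_ge0.
  by rewrite min_r.
apply: funext => w; rewrite /rD mm0 addr0 sB0 subr0.
case: eqP => [->//|_]; case: ifP => _; first by rewrite max_r.
case: ifP => // /set_mem /fY ->; rewrite sub0r.
by rewrite max_l // oppr_le0 sA_ge0.
Qed.

Lemma rD_idX D f : nonneg f -> (forall w, XA w -> f w = 0) -> rD D f = f.
Proof.
move=> nf fX; have sA0 : sA D f = 0 by apply: fsbig1 => w [_ /fX].
have mm0 : mm D f = 0.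
  rewrite /mm sA0 !fsbig1 ?addr0 // => w [_ Hw].
    by rewrite min_r.
  by rewrite fX // min_l // sB_ge0.
apply: funext => w; rewrite /rD mm0 addr0 sA0 subr0.
case: eqP => [->//|_]; case: ifP => [/set_mem /fX ->|_].
  by rewrite sub0r max_l // oppr_le0 sB_ge0.
by case: ifP => // _; rewrite max_r.
Qed.

Lemma maxsub (p q : R) : Num.max 0 (p - q) = p - Num.min p q.
Proof.
case: (leP p q) => h.
  by rewrite subrr max_l // subr_le0.
by rewrite max_r // subr_ge0 ltW.
Qed.

Lemma fsumD (D : set V) (F G : V -> R) : finite_set D ->
  \sum_(w \in D) (F w + G w) = \sum_(w \in D) F w + \sum_(w \in D) G w.
Proof. by move=> fD; rewrite fsbig_split. Qed.

Lemma fsumB (D : set V) (F G : V -> R) : finite_set D ->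
  \sum_(w \in D) (F w - G w) = \sum_(w \in D) F w - \sum_(w \in D) G w.
Proof. by move=> fD; rewrite !fsbig_finite // sumrB. Qed.

Lemma le_sB D f w : nonneg f -> finite_set D -> (forall w, ~ D w -> f w = 0) ->
  YA w -> f w <= sB D f.
Proof.
move=> nf fD Df Yw; have [Dw|nDw] := pselect (D w); last by rewrite Df // sB_ge0.
have fDY : finite_set (D `&` YA) by exact: finite_setIl.
rewrite /sB (fsbigD1 w (D `&` YA)) //.
by rewrite lerDl fsumr_ge0.
Qed.

Lemma le_sA D f w : nonneg f -> finite_set D -> (forall w, ~ D w -> f w = 0) ->
  XA w -> f w <= sA D f.
Proof.
move=> nf fD Df Xw; have [Dw|nDw] := pselect (D w); last by rewrite Df // sA_ge0.
have fDX : finite_set (D `&` XA) by exact: finite_setIl.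
rewrite /sA (fsbigD1 w (D `&` XA)) //.
by rewrite lerDl fsumr_ge0.
Qed.

Lemma XA_YA w : XA w -> ~ YA w.
Proof. by move=> [Xw nXY] [Yw _]; apply: nXY. Qed.

Lemma notXA_v : (X `&` Y) v -> (v \in XA) = false.
Proof. by move=> Av; apply/negbTE/negP => /set_mem [_]. Qed.
Lemma notYA_v : (X `&` Y) v -> (v \in YA) = false.
Proof. by move=> Av; apply/negbTE/negP => /set_mem [_]. Qed.

Lemma rD_out D f w : D v -> nonneg f -> (forall w, ~ D w -> f w = 0) -> ~ D w ->
  rD D f w = 0.
Proof.
move=> Dv nf Df nDw; rewrite /rD; case: eqP => [wv|_]; first by rewrite wv in nDw.
rewrite Df // !sub0r; case: ifP => _; first by rewrite max_l // oppr_le0 sB_ge0.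
by case: ifP => _ //; rewrite max_l // oppr_le0 sA_ge0.
Qed.

Lemma rD_decomp D f w : (X `&` Y) v ->
  rD D f w = f w + (if w == v then mm D f else 0)
    - (if w \in XA then Num.min (f w) (sB D f) else 0)
    - (if w \in YA then Num.min (f w) (sA D f) else 0).
Proof.
move=> Av; rewrite /rD; case: eqP => [->|_].
  by rewrite notXA_v // notYA_v // !subr0.
rewrite addr0; case: ifP => [/set_mem xa|_].
  have -> : (w \in YA) = false by apply/negbTE/negP => /set_mem; exact: XA_YA.
  by rewrite maxsub subr0.
by case: ifP => _; rewrite ?maxsub ?subr0 ?sub0r.
Qed.

Lemma rD_sum D f : finite_set D -> D v -> (X `&` Y) v -> nonneg f ->
  (forall w, ~ D w -> f w = 0) -> \sum_(w \in D) f w = 1 ->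
  \sum_(w \in D) rD D f w = 1.
Proof.
move=> fD Dv Av nf Df s1.
under eq_fsbigr do rewrite rD_decomp //.
rewrite !fsumB // fsumD // s1.
have -> : \sum_(w \in D) (if w == v then mm D f else 0) = mm D f.
  rewrite -(fsbig_widen [set v] D (fun w => if w == v then mm D f else 0)).
  - by rewrite fsbig_set1 eqxx.
  - by move=> w ->.
  - by move=> w [_ /= /eqP /negbTE ->].
have -> : \sum_(w \in D) (if w \in XA then Num.min (f w) (sB D f) else 0) =
    \sum_(w \in D `&` XA) Num.min (f w) (sB D f).
  rewrite -(fsbig_widen (D `&` XA) D (fun w => if w \in XA then Num.min (f w) (sB D f) else 0)).
  - by apply: eq_fsbigr => w /set_mem [_ /mem_set ->].
  - by move=> w [].
  - by move=> w [_ /not_andP [//|nX]] /=; rewrite memNset.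
have -> : \sum_(w \in D) (if w \in YA then Num.min (f w) (sA D f) else 0) =
    \sum_(w \in D `&` YA) Num.min (f w) (sA D f).
  rewrite -(fsbig_widen (D `&` YA) D (fun w => if w \in YA then Num.min (f w) (sA D f) else 0)).
  - by apply: eq_fsbigr => w /set_mem [_ /mem_set ->].
  - by move=> w [].
  - by move=> w [_ /not_andP [//|nX]] /=; rewrite memNset.
rewrite /mm; ring.
Qed.

Lemma rD_YA0 D f w : (X `&` Y) v -> finite_set D -> nonneg f ->
  (forall w, ~ D w -> f w = 0) -> sB D f <= sA D f -> YA w -> rD D f w = 0.
Proof.
move=> Av fD nf Df le Yw; rewrite /rD; case: eqP => [wv|_].
  by move: Yw; rewrite wv => -[_].
have -> : (w \in XA) = false.
  by apply/negbTE/negP => /set_mem xa; exact: (XA_YA xa Yw).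
rewrite (mem_set Yw) max_l // subr_le0; apply: le_trans le.
exact: le_sB.
Qed.

Lemma rD_XA0 D f w : (X `&` Y) v -> finite_set D -> nonneg f ->
  (forall w, ~ D w -> f w = 0) -> sA D f <= sB D f -> XA w -> rD D f w = 0.
Proof.
move=> Av fD nf Df le Xw; rewrite /rD; case: eqP => [wv|_].
  by move: Xw; rewrite wv => -[_].
rewrite (mem_set Xw) max_l // subr_le0; apply: le_trans le.
exact: le_sA.
Qed.

Lemma fst_cont (T U : topologicalType) : continuous (@fst T U).
Proof. by move=> p; exact: cvg_fst. Qed.
Lemma snd_cont (T U : topologicalType) : continuous (@snd T U).
Proof. by move=> p; exact: cvg_snd. Qed.

Lemma cont_ext (T U : topologicalType) (f g : T -> U) :
  (forall x, f x = g x) -> continuous g -> continuous f.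
Proof. by move=> e; rewrite (funext e). Qed.

Lemma fsum_cont (E : set V) (G : V -> {ptws V -> R} -> R) : finite_set E ->
  (forall w, continuous (G w)) ->
  continuous (fun f : {ptws V -> R} => \sum_(w \in E) G w f).
Proof.
move=> fE cG.
apply: cont_ext; first by move=> f; rewrite fsbig_finite.
exact: cont_sum_seq.
Qed.

Lemma sA_cont D : finite_set D -> continuous (sA D : {ptws V -> R} -> R).
Proof.
move=> fD; apply: (@fsum_cont _ (fun w f => f w)); first exact: finite_setIl.
by move=> w; exact: proj_cont.
Qed.
Lemma sB_cont D : finite_set D -> continuous (sB D : {ptws V -> R} -> R).
Proof.
move=> fD; apply: (@fsum_cont _ (fun w f => f w)); first exact: finite_setIl.
by move=> w; exact: proj_cont.
Qed.

Lemma mm_cont D : finite_set D -> continuous (mm D : {ptws V -> R} -> R).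
Proof.
move=> fD f; apply: continuousD.
  apply: (@fsum_cont _ (fun u f => Num.min (f u) (sB D f))); first exact: finite_setIl.
  move=> u; apply: min_fun_continuous; [exact: proj_cont | exact: sB_cont].
apply: (@fsum_cont _ (fun u f => Num.min (f u) (sA D f))); first exact: finite_setIl.
move=> u; apply: min_fun_continuous; [exact: proj_cont | exact: sA_cont].
Qed.

Lemma rD_cont D : finite_set D -> continuous (rD D : {ptws V -> R} -> {ptws V -> R}).
Proof.
move=> fD; apply: ptws_cont => w; rewrite /rD.
case: (w == v).
  by move=> f; apply: continuousD; [exact: proj_cont | exact: mm_cont].
case: (w \in XA).
  apply: max_fun_continuous; first exact: cst_continuous.
  by move=> f; apply: continuousB; [exact: proj_cont | exact: sB_cont].
case: (w \in YA); last exact: proj_cont.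
apply: max_fun_continuous; first exact: cst_continuous.
by move=> f; apply: continuousB; [exact: proj_cont | exact: sA_cont].
Qed.

Lemma contD2 (T : topologicalType) (F G : T -> R) :
  continuous F -> continuous G -> continuous (fun x => F x + G x).
Proof. by move=> cF cG p; apply: continuousD; [exact: cF | exact: cG]. Qed.
Lemma contM2 (T : topologicalType) (F G : T -> R) :
  continuous F -> continuous G -> continuous (fun x => F x * G x).
Proof. by move=> cF cG p; apply: continuousM; [exact: cF | exact: cG]. Qed.
Lemma contB2 (T : topologicalType) (F G : T -> R) :
  continuous F -> continuous G -> continuous (fun x => F x - G x).
Proof. by move=> cF cG p; apply: continuousB; [exact: cF | exact: cG]. Qed.

Lemma DmD_coord_cont D w : finite_set D ->
  continuous (fun p : ({ptws V -> R} * R)%type => (1 - p.2) * rD D p.1 w + p.2 * p.1 w).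
Proof.
move=> fD.
apply: contD2; apply: contM2.
- apply: contB2; first exact: cst_continuous.
  exact: snd_cont.
- move=> p; apply: (@continuous_comp _ _ _ fst (fun f : {ptws V -> R} => rD D f w)).
    exact: fst_cont.
  apply: (@continuous_comp _ _ _ (rD D : {ptws V -> R} -> {ptws V -> R}) (fun f : {ptws V -> R} => f w)).
    exact: rD_cont.
  exact: proj_cont.
- exact: snd_cont.
- move=> p; apply: (@continuous_comp _ _ _ fst (fun f : {ptws V -> R} => f w)).
    exact: fst_cont.
  exact: proj_cont.
Qed.

Lemma DmD_cont D : finite_set D ->
  continuous (DmD D : ({ptws V -> R} * R)%type -> {ptws V -> R}).
Proof.
by move=> fD; apply: ptws_cont => w; exact: DmD_coord_cont.
Qed.
End Retr.
Arguments sA {R V} X Y D f.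
Arguments sB {R V} X Y D f.
Arguments mm {R V} X Y D f.
Arguments rD {R V} X Y v D f.
Arguments DmD {R V} X Y v D p.
Arguments nonneg {R V} f.

Unset Implicit Arguments.
Set Strict Implicit.

Section Simp.
Variables (R : realType) (V : choiceType) (K : set (set V)) (X Y : set V) (v : V).
Hypothesis HK : simplicial_complex K.
Hypothesis HXY : X `|` Y = vertices K.
Local Notation XA := (X `\` (X `&` Y)).
Local Notation YA := (Y `\` (X `&` Y)).
Local Notation gs := (gsimplex R V).
Local Notation rr := (@rD R V X Y v setT).

Lemma simp_fin {s} : K s -> finite_set s.
Proof. by move=> Ks; case: HK => /(_ s Ks) []. Qed.

Lemma simp_sub {s t} : K s -> t `<=` s -> t !=set0 -> K t.
Proof. by case: HK => _ H; exact: H. Qed.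

Lemma simp_vert {s w} : K s -> s w -> (X `|` Y) w.
Proof.
move=> Ks sw; rewrite HXY; have : K [set w].
  apply: (simp_sub Ks); first by move=> u ->.
  by exists w.
by [].
Qed.

Lemma gs_nonneg {s f} : gs s f -> nonneg f.
Proof. by case. Qed.
Lemma gs_out {s f} : gs s f -> forall w, ~ s w -> f w = 0.
Proof.
case=> _ [sup _] w nsw; apply/eqP; apply: contrapT => /negP fw.
exact/nsw/sup.
Qed.
Lemma gs_sum {s f} : gs s f -> \sum_(w \in s) f w = 1.
Proof. by case=> _ []. Qed.
Lemma gs_mk {s f} : nonneg f -> (forall w, ~ s w -> f w = 0) ->
  \sum_(w \in s) f w = 1 -> gs s f.
Proof.
move=> nf out s1; split => //; split => // w /= fw0.
by apply: contrapT => nsw; move/eqP: fw0; apply; apply: out.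
Qed.

Lemma gs_mono {s s' f} : gs s f -> s `<=` s' -> gs s' f.
Proof.
move=> gf ss'; apply: gs_mk; first exact: gs_nonneg gf.
  by move=> w ns'w; apply: (gs_out gf) => /ss'.
rewrite -(gs_sum gf); apply/esym/fsbig_widen => // w [_ nsw].
exact: (gs_out gf).
Qed.

Lemma gs_restrict {s f Z} : gs s f -> (forall w, s w -> ~ Z w -> f w = 0) ->
  gs (s `&` Z) f.
Proof.
move=> gf HZ; apply: gs_mk; first exact: gs_nonneg gf.
  move=> w /not_andP [nsw|nZw]; first exact: (gs_out gf).
  have [sw|nsw] := pselect (s w); first exact: HZ.
  exact: (gs_out gf).
rewrite -(gs_sum gf); apply: fsbig_widen => // w [sw /not_andP [//|nZ]].
exact: HZ.
Qed.

Lemma gs_convex {s f g} (t : R) : finite_set s -> gs s f -> gs s g -> 0 <= t <= 1 ->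
  gs s (fun w => (1 - t) * g w + t * f w).
Proof.
move=> fs gf gg /andP [t0 t1]; apply: gs_mk.
- move=> w; apply: addr_ge0; apply: mulr_ge0 => //.
  + by rewrite subr_ge0.
  + exact: (gs_nonneg gg).
  + exact: (gs_nonneg gf).
- by move=> w nsw; rewrite (gs_out gf) // (gs_out gg) // !mulr0 addr0.
rewrite fsumD // -!mulr_fsumr (gs_sum gf) (gs_sum gg); ring.
Qed.


Hypothesis HQ : forall s, K s -> s `&` XA !=set0 -> s `&` YA !=set0 ->
  (X `&` Y) v /\ K (s `|` [set v]).

Local Notation both s := (s `&` XA !=set0 /\ s `&` YA !=set0).

Lemma caseN {s} : K s -> ~ both s -> s `<=` X \/ s `<=` Y.
Proof.
move=> Ks nb; have [[y [sy Yy]]|nY] := pselect (s `&` YA !=set0).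
  right => w sw; have [Yw|nYw] := pselect (Y w) => //.
  have [Xw|] := simp_vert Ks sw; last by [].
  exfalso; apply: nb; split; last by exists y.
  by exists w; split => //; split => // -[].
left => w sw; have [Xw|nXw] := pselect (X w) => //.
have [//|Yw] := simp_vert Ks sw.
by exfalso; apply: nY; exists w; split => //; split => // -[].
Qed.

Lemma rr_id_sub {f Z} : nonneg f -> (forall w, ~ Z w -> f w = 0) ->
  Z `<=` X \/ Z `<=` Y -> rr f = f.
Proof.
move=> nf out [ZX|ZY].
  by apply: rD_idY => // w [Yw nXY]; apply: out => /ZX Xw; apply: nXY.
by apply: rD_idX => // w [Xw nXY]; apply: out => /ZY Yw; apply: nXY.
Qed.

Lemma full_L {s} : K s -> s `<=` X \/ s `<=` Y ->
  (full_sub K X `|` full_sub K Y) s.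
Proof. by move=> Ks [sX|sY]; [left|right]. Qed.

Lemma caseB {s} : K s -> both s ->
  [/\ K (s `|` [set v]), finite_set (s `|` [set v]), (X `&` Y) v,
      (forall f, gs s f -> gs (s `|` [set v]) (rr f)) &
      (forall f, gs s f -> rr f = rD X Y v s f)].
Proof.
move=> Ks [bX bY]; have [Av Ks'] := HQ _ Ks bX bY.
have fs' : finite_set (s `|` [set v]).
  by rewrite finite_setU; split; [exact: simp_fin | exact: finite_set1].
split => // f gf.
  have nf := gs_nonneg gf.
  have out' : forall w, ~ (s `|` [set v]) w -> f w = 0.
    by move=> w /not_orP [nsw _]; exact: (gs_out gf).
  rewrite (rD_widen X Y v nf out').
  apply: gs_mk.
  - exact: rD_ge0.
  - by move=> w nw; apply: rD_out => //; right.
  - apply: rD_sum => //; first by right.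
    exact: gs_sum (gs_mono gf (fun w sw => or_introl sw)).
by apply: (rD_widen X Y v); [exact: gs_nonneg gf | exact: gs_out gf].
Qed.

Lemma caseB_X {s f} : K s -> both s -> gs s f -> sB X Y setT f <= sA X Y setT f ->
  gs ((s `|` [set v]) `&` X) (rr f) /\ full_sub K X ((s `|` [set v]) `&` X).
Proof.
move=> Ks b gf le; have [Ks' fs' Av gs' _] := caseB Ks b.
have nf := gs_nonneg gf.
have out' : forall w, ~ (s `|` [set v]) w -> f w = 0.
  by move=> w /not_orP [nsw _]; exact: (gs_out gf).
split; last first.
  split; last by move=> w [].
  apply: (simp_sub Ks'); first by move=> w [].
  by exists v; split; [right | case: Av].
apply: gs_restrict; first exact: gs' gf.
move=> w s'w nXw.
have Yw : Y w.
  case: s'w => [sw|->]; last by case: Av.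
  by case: (simp_vert Ks sw).
rewrite (rD_widen X Y v nf out').
apply: (rD_YA0 Av fs' nf out'); last by split => // -[].
by rewrite -(sA_widen X Y out') -(sB_widen X Y out').
Qed.

Lemma caseB_Y {s f} : K s -> both s -> gs s f -> sA X Y setT f <= sB X Y setT f ->
  gs ((s `|` [set v]) `&` Y) (rr f) /\ full_sub K Y ((s `|` [set v]) `&` Y).
Proof.
move=> Ks b gf le; have [Ks' fs' Av gs' _] := caseB Ks b.
have nf := gs_nonneg gf.
have out' : forall w, ~ (s `|` [set v]) w -> f w = 0.
  by move=> w /not_orP [nsw _]; exact: (gs_out gf).
split; last first.
  split; last by move=> w [].
  apply: (simp_sub Ks'); first by move=> w [].
  by exists v; split; [right | case: Av].
apply: gs_restrict; first exact: gs' gf.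
move=> w s'w nYw.
have Xw : X w.
  case: s'w => [sw|->]; last by case: Av.
  by case: (simp_vert Ks sw).
rewrite (rD_widen X Y v nf out').
apply: (rD_XA0 Av fs' nf out'); last by split => // -[].
by rewrite -(sA_widen X Y out') -(sB_widen X Y out').
Qed.


Lemma caseB_LX {s} : K s -> both s -> full_sub K X ((s `|` [set v]) `&` X).
Proof.
move=> Ks b; have [Ks' fs' Av gs' _] := caseB Ks b.
split; last by move=> w [].
apply: (simp_sub Ks'); first by move=> w [].
by exists v; split; [right | case: Av].
Qed.

Lemma caseB_LY {s} : K s -> both s -> full_sub K Y ((s `|` [set v]) `&` Y).
Proof.
move=> Ks b; have [Ks' fs' Av gs' _] := caseB Ks b.
split; last by move=> w [].
apply: (simp_sub Ks'); first by move=> w [].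
by exists v; split; [right | case: Av].
Qed.

Lemma rr_eq {s f} : gs s f -> rr f = rD X Y v s f.
Proof. by move=> gf; apply: (rD_widen X Y v); [exact: gs_nonneg gf | exact: gs_out gf]. Qed.

Lemma ext {s} : K s -> exists s', [/\ K s', s `<=` s', finite_set s' &
  forall f, gs s f -> gs s' (rr f)].
Proof.
move=> Ks; have [b|nb] := pselect (both s).
  have [Ks' fs' Av gs' _] := caseB Ks b.
  by exists (s `|` [set v]); split => //; move=> w sw; left.
exists s; split => //; first exact: simp_fin.
move=> f gf; rewrite (rr_id_sub (gs_nonneg gf) (gs_out gf)) //.
exact: caseN.
Qed.

Lemma rr_real {f} : realization R V K f ->
  realization R V (full_sub K X `|` full_sub K Y) (rr f).
Proof.
case=> s Ks gf; have [b|nb] := pselect (both s).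
  have [le|le] := orP (le_total (sB X Y setT f) (sA X Y setT f)).
    exists ((s `|` [set v]) `&` X); first by left; exact: caseB_LX.
    by case: (caseB_X Ks b gf le).
  exists ((s `|` [set v]) `&` Y); first by right; exact: caseB_LY.
  by case: (caseB_Y Ks b gf le).
have sXY := caseN Ks nb.
rewrite (rr_id_sub (gs_nonneg gf) (gs_out gf)) //.
by exists s => //; exact: full_L.
Qed.

Local Notation L := (full_sub K X `|` full_sub K Y).

Lemma open_pre (h : {ptws V -> R} -> {ptws V -> R}) (W : set {ptws V -> R}) :
  continuous h -> open W -> open (h @^-1` W).
Proof. by move=> ch oW; move/continuousP: ch; apply. Qed.

Lemma open_lt_fun (a b : {ptws V -> R} -> R) :
  continuous a -> continuous b -> open [set f | a f < b f].
Proof.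
move=> ca cb.
have -> : [set f | a f < b f] = (fun f => b f - a f) @^-1` [set x | 0 < x].
  by apply/seteqP; split => f /=; rewrite subr_gt0.
move: (@open_gt R 0); apply: (proj1 (continuousP _)).
exact: contB2.
Qed.

Lemma CO U : coherent_open R V L U ->
  coherent_open R V K [set f | realization R V K f /\ U (rr f)].
Proof.
move=> [UL HU]; split; first by move=> f [].
move=> s Ks; have fs := simp_fin Ks.
have [b|nb] := pselect (both s); last first.
  have sXY := caseN Ks nb.
  have [W [oW EW]] := HU s (full_L Ks sXY).
  exists W; split => //; apply/seteqP; split => f [Hf gf].
    have ff : rr f = f by rewrite (rr_id_sub (gs_nonneg gf) (gs_out gf)).
    case: Hf => _ Uf; rewrite ff in Uf.
    have : (U `&` gs s) f by [].
    by rewrite EW => -[].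
  have ff : rr f = f by rewrite (rr_id_sub (gs_nonneg gf) (gs_out gf)).
  have : (W `&` gs s) f by [].
  rewrite -EW => -[Uf _]; split => //; split; first by exists s.
  by rewrite ff.
have L1 : L ((s `|` [set v]) `&` X) by left; exact: caseB_LX.
have L2 : L ((s `|` [set v]) `&` Y) by right; exact: caseB_LY.
have [W1 [oW1 E1]] := HU _ L1.
have [W2 [oW2 E2]] := HU _ L2.
pose h := (rD X Y v s : {ptws V -> R} -> {ptws V -> R}).
have ch : continuous h := rD_cont fs.
exists ((h @^-1` W1 `&` h @^-1` W2) `|` (h @^-1` W1 `&` [set f | sB X Y s f < sA X Y s f])
   `|` (h @^-1` W2 `&` [set f | sA X Y s f < sB X Y s f])); split.
  have cA : continuous (sA X Y s : {ptws V -> R} -> R) := sA_cont fs.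
  have cB : continuous (sB X Y s : {ptws V -> R} -> R) := sB_cont fs.
  apply: openU; first apply: openU.
  - by apply: openI; apply: open_pre.
  - by apply: openI; [apply: open_pre | apply: open_lt_fun].
  - by apply: openI; [apply: open_pre | apply: open_lt_fun].
apply/seteqP; split => f [Hf gf].
all: have e := rr_eq gf.
all: have eA : sA X Y setT f = sA X Y s f := sA_widen X Y (gs_out gf).
all: have eB : sB X Y setT f = sB X Y s f := sB_widen X Y (gs_out gf).
all: have G1 : sB X Y s f <= sA X Y s f -> gs ((s `|` [set v]) `&` X) (rr f)
  by move=> le; case: (caseB_X Ks b gf); rewrite ?eA ?eB.
all: have G2 : sA X Y s f <= sB X Y s f -> gs ((s `|` [set v]) `&` Y) (rr f)
  by move=> le; case: (caseB_Y Ks b gf); rewrite ?eA ?eB.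
all: have toU1 : sB X Y s f <= sA X Y s f -> W1 (rr f) -> U (rr f).
all: try (move=> le W1f; have : (W1 `&` gs ((s `|` [set v]) `&` X)) (rr f) by split => //; exact: G1).
all: try (by rewrite -E1 => -[]).
all: have toU2 : sA X Y s f <= sB X Y s f -> W2 (rr f) -> U (rr f).
all: try (move=> le W2f; have : (W2 `&` gs ((s `|` [set v]) `&` Y)) (rr f) by split => //; exact: G2).
all: try (by rewrite -E2 => -[]).
all: have toW1 : sB X Y s f <= sA X Y s f -> U (rr f) -> W1 (rr f).
all: try (move=> le Uf; have : (U `&` gs ((s `|` [set v]) `&` X)) (rr f) by split => //; exact: G1).
all: try (by rewrite E1 => -[]).
all: have toW2 : sA X Y s f <= sB X Y s f -> U (rr f) -> W2 (rr f).
all: try (move=> le Uf; have : (U `&` gs ((s `|` [set v]) `&` Y)) (rr f) by split => //; exact: G2).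
all: try (by rewrite E2 => -[]).
  have hW1 : W1 (rr f) -> (h @^-1` W1) f by rewrite e => H; exact: H.
  have hW2 : W2 (rr f) -> (h @^-1` W2) f by rewrite e => H; exact: H.
  case: Hf => _ Uf; split => //.
  case: (ltgtP (sB X Y s f) (sA X Y s f)) => lt.
  - by left; right; split => //; apply: hW1; apply: toW1 => //; exact: ltW.
  - by right; split => //; apply: hW2; apply: toW2 => //; exact: ltW.
  - by left; left; split; [apply: hW1; apply: toW1 | apply: hW2; apply: toW2]; rewrite // lt.
split => //; split; first by exists s.
have hW1 : (h @^-1` W1) f -> W1 (rr f) by rewrite e => H; exact: H.
have hW2 : (h @^-1` W2) f -> W2 (rr f) by rewrite e => H; exact: H.
case: Hf => [[[/hW1 W1f /hW2 W2f]|[/hW1 W1f lt]]|[/hW2 W2f lt]].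
- case/orP: (le_total (sB X Y s f) (sA X Y s f)) => le.
    exact: toU1.
  exact: toU2.
- by apply: toU1 => //; exact: ltW.
- by apply: toU2 => //; exact: ltW.
Qed.


Lemma contL {Z : topologicalType} (D : set Z) (g : Z -> V -> R) :
  cont_on R V K D g -> cont_on R V L D (fun z => rr (g z)).
Proof.
move=> [gR gO]; split; first by move=> z Dz; apply: rr_real; exact: gR.
move=> U HU; have [Op [oO EO]] := gO _ (CO _ HU).
exists Op; split => //; rewrite -EO; apply/seteqP; split => z [Uz Dz]; split => //.
- by split => //; exact: gR.
- by case: Uz.
Qed.

Lemma ballR (a b e : R) : ball a e b <-> `|b - a| < e.
Proof. by rewrite -ball_normE /ball_ /= distrC. Qed.

Lemma DmD_key {s s' f} (t : R) : finite_set s' -> gs s f -> s `<=` s' ->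
  (forall f, gs s f -> gs s' (rr f)) -> `[0, 1]%classic t ->
  DmD X Y v setT (f, t) = DmD X Y v s (f, t) /\ gs s' (DmD X Y v setT (f, t)).
Proof.
move=> fs' gf ss' Hs' It; split; first by rewrite /DmD /= (rr_eq gf).
apply: gs_convex; [exact: fs' | exact: gs_mono gf ss' | exact: Hs' | by move: It; rewrite /= in_itv].
Qed.

Lemma COH U (t0 d : R) : coherent_open R V K U ->
  coherent_open R V K [set f | realization R V K f /\ forall t, `[0, 1]%classic t ->
     `|t - t0| <= d -> U (DmD X Y v setT (f, t))].
Proof.
move=> [UK HU]; split; first by move=> f [].
move=> s Ks; have fs := simp_fin Ks.
have [s' [Ks' ss' fs' Hs']] := ext Ks.
have [W [oW EW]] := HU s' Ks'.
pose J := `[t0 - d, t0 + d]%classic `&` `[0, 1]%classic.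
have cJ : compact J.
  by apply: compact_closedI; [exact: segment_compact | exact: itv_closed].
exists [set f | forall t, J t -> W (DmD X Y v s (f, t))]; split.
  apply: (@tube_open R _ _ (DmD X Y v s : ({ptws V -> R} * R)%type -> {ptws V -> R}) J W) => //.
  exact: DmD_cont.
apply/seteqP; split => f [Hf gf]; split => //.
  case: Hf => _ Hf t [Jt It]; have [e1 e2] := DmD_key _ fs' gf ss' Hs' It.
  rewrite -e1.
  have : (U `&` gs s') (DmD X Y v setT (f, t)).
    split => //; apply: Hf => //.
    by move: Jt; rewrite /= in_itv ler_distl.
  by rewrite EW => -[].
split; first by exists s.
move=> t It dt; have [e1 e2] := DmD_key _ fs' gf ss' Hs' It.
have : (W `&` gs s') (DmD X Y v setT (f, t)).
  split => //; rewrite e1; apply: Hf; split => //.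
  by rewrite /= in_itv -ler_distl.
by rewrite -EW => -[].
Qed.


Lemma contH {Z : topologicalType} (D : set Z) (g : Z -> V -> R) :
  cont_on R V K D g ->
  cont_on R V K (D `*` (`[0, 1]%classic : set R)) (fun p => DmD X Y v setT (g p.1, p.2)).
Proof.
move=> [gR gO]; split.
  move=> [z t] [/= Dz It]; have [s Ks gz] := gR z Dz.
  have [s' [Ks' ss' fs' Hs']] := ext Ks.
  by exists s' => //; case: (DmD_key _ fs' gz ss' Hs' It).
move=> U HU; apply: local_relopen => -[z0 t0] /= HU0 [/= Dz0 It0].
have [s0 Ks0 gz0] := gR z0 Dz0.
have [s0' [Ks0' ss0' fs0' Hs0']] := ext Ks0.
have [UK HUK] := HU.
have [W0 [oW0 EW0]] := HUK s0' Ks0'.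
have fs0 := simp_fin Ks0.
have W0t0 : W0 (DmD X Y v s0 (g z0, t0)).
  have [e1 e2] := DmD_key _ fs0' gz0 ss0' Hs0' It0.
  have : (U `&` gs s0') (DmD X Y v setT (g z0, t0)) by [].
  by rewrite EW0 e1 => -[].
have cT : continuous (fun t : R => (DmD X Y v s0 (g z0, t) : {ptws V -> R})).
  apply: ptws_cont => w; rewrite /DmD /=.
  have cid : continuous (fun t : R => t) by move=> x; exact: cvg_id.
  apply: contD2; apply: contM2; try exact: cst_continuous; try exact: cid.
  by apply: contB2; [exact: cst_continuous | exact: cid].
have : nbhs t0 ((fun t => (DmD X Y v s0 (g z0, t) : {ptws V -> R})) @^-1` W0).
  by apply: cT; apply: open_nbhs_nbhs; split.
move=> /nbhs_ballP [e e0 He].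
pose d := e / 2.
have d0 : 0 < d by rewrite divr_gt0.
have de : d < e by rewrite /d ltr_pdivrMr // ltr_pMr // ltr1n.
have [Op [oO EO]] := gO _ (COH _ t0 d HU).
exists ((fst @^-1` Op) `&` (snd @^-1` ball t0 d)); split; [|split].
- apply: openI; apply: (proj1 (continuousP _)); [exact: fst_cont | exact: oO |
    exact: snd_cont | exact: ball_open].
- have : (g @^-1` [set f | realization R V K f /\ forall t, `[0, 1]%classic t ->
     `|t - t0| <= d -> U (DmD X Y v setT (f, t))] `&` D) z0.
    split => //; split; first exact: gR.
    move=> t It dt; have [e1 e2] := DmD_key _ fs0' gz0 ss0' Hs0' It.
    have : (W0 `&` gs s0') (DmD X Y v setT (g z0, t)).
      split => //; rewrite e1; apply: He; apply/ballR.
      exact: le_lt_trans dt de.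
    by rewrite -EW0 => -[].
  rewrite EO => -[Oz _]; split => //=.
  exact: ballxx.
- move=> [z t] [[/= Oz bt] [/= Dz It]].
  have : (Op `&` D) z by [].
  rewrite -EO => -[[_ Hz] _]; apply: Hz => //.
  by apply: ltW; move/ballR: bt.
Qed.


Lemma rr_idL f : realization R V L f -> rr f = f.
Proof.
case=> s Ls gf; apply: (rr_id_sub (gs_nonneg gf) (gs_out gf)).
by case: Ls => -[_ ?]; [left|right].
Qed.

Lemma DmD0 (f : V -> R) : DmD X Y v setT (f, 0) = rr f.
Proof. by apply: funext => w; rewrite /DmD /= subr0 mul1r mul0r addr0. Qed.
Lemma DmD1 (f : V -> R) : DmD X Y v setT (f, 1) = f.
Proof. by apply: funext => w; rewrite /DmD /= subrr mul0r mul1r add0r. Qed.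
Lemma DmDid (f : V -> R) (t : R) : rr f = f -> DmD X Y v setT (f, t) = f.
Proof. by move=> e; apply: funext => w; rewrite /DmD /= e; ring. Qed.

Lemma weq : incl_weak_equivalence R L K.
Proof.
move=> n x Lx; have rx := rr_idL _ Lx; split.
  move=> g [cg gx]; exists (fun s => rr (g s)).
    by split; [exact: contL | rewrite gx].
  exists (fun p => DmD X Y v setT (g p.1, p.2)); split; first exact: contH.
  split; first by move=> s _; rewrite /= DmD0 DmD1.
  by move=> t _; rewrite /= gx DmDid.
move=> h1 h2 [ch1 h1x] [ch2 h2x] [H [cH [H01 Hb]]].
exists (fun p => rr (H p)); split; first exact: contL.
split; last by move=> t It; rewrite /= Hb.
move=> s us; have [-> ->] := H01 s us.
by rewrite !(rr_idL _) //; [case: ch2 => + _; apply | case: ch1 => + _; apply].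
Qed.

End Simp.

Section Comb.
Variables (V : choiceType) (K : set (set V)) (X Y : set V).
Hypothesis HK : simplicial_complex K.
Hypothesis Hcl : clique K.
Hypothesis HXY : X `|` Y = vertices K.
Local Notation XA := (X `\` (X `&` Y)).
Local Notation YA := (Y `\` (X `&` Y)).
Local Notation HQform v := (forall s, K s -> s `&` XA !=set0 -> s `&` YA !=set0 ->
  (X `&` Y) v /\ K (s `|` [set v])).
Local Notation Eset := (edges K `\` [set s | K s /\ (s `<=` X \/ s `<=` Y \/ s `&` (X `&` Y) !=set0)]).

Let csub {s t} : K s -> t `<=` s -> t !=set0 -> K t.
Proof. by case: HK => _ H; exact: H. Qed.
Let cfin {s} : K s -> finite_set s.
Proof. by move=> Ks; case: HK => /(_ s Ks) []. Qed.
Let cvert {s w} : K s -> s w -> (X `|` Y) w.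
Proof.
move=> Ks sw; rewrite HXY; have : K [set w].
  apply: (csub Ks); first by move=> u ->.
  by exists w.
by [].
Qed.

Let XAnYA {w} : XA w -> ~ YA w.
Proof. by move=> [Xw nA] [Yw _]; apply: nA. Qed.

Let split3 {s w} : K s -> s w -> XA w \/ YA w \/ (X `&` Y) w.
Proof.
move=> Ks sw; have [Xw|Yw] := cvert Ks sw.
  have [Yw|nYw] := pselect (Y w); first by right; right.
  by left; split => // -[].
have [Xw|nXw] := pselect (X w); first by right; right.
by right; left; split => // -[].
Qed.

Lemma extendQ v : (forall s, K s -> s `&` XA !=set0 -> s `&` YA !=set0 ->
    (X `&` Y) v /\ (forall w, s w -> K [set v; w])) -> HQform v.
Proof.
move=> H s Ks bX bY; have [Av Hw] := H s Ks bX bY; split => //.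
case: bX => x [sx Xx]; case: bY => y [sy Yy].
have fs : finite_set (s `|` [set v]).
  by rewrite finite_setU; split; [exact: cfin | exact: finite_set1].
have ex : exists a b, (s `|` [set v]) a /\ (s `|` [set v]) b /\ a <> b.
  exists x, y; split; first by left.
  split; first by left.
  by move=> exy; rewrite exy in Xx; exact: (XAnYA Xx).
apply/(Hcl _ fs ex).
move=> a b [sa|av] [sb|bv] ab.
- apply: (csub Ks); first by move=> u [->|->].
  by exists a; left.
- by rewrite bv setUC; exact: Hw.
- by rewrite av; exact: Hw.
- by exfalso; apply: ab; rewrite av bv.
Qed.

Lemma E_xy x y : XA x -> YA y -> K [set x; y] -> Eset [set x; y].
Proof.
move=> Xx Yy Kt; split.
  split => //; exists x, y; split => //.
  by move=> exy; rewrite exy in Xx; exact: (XAnYA Xx).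
move=> [_ [tX|[tY|[u [tu Au]]]]].
- by case: Yy => Yy' nA; apply: nA; split => //; apply: tX; right.
- by case: Xx => Xx' nA; apply: nA; split => //; apply: tY; left.
- by case: tu Au => -> Au; [case: Xx => _ /(_ Au) | case: Yy => _ /(_ Au)].
Qed.

Let sub2 {s a b} : K s -> s a -> s b -> K [set a; b].
Proof.
move=> Ks sa sb; apply: (csub Ks); first by move=> u [->|->].
by exists a; left.
Qed.

Lemma case1 v : (forall t, Eset t -> St K t (X `&` Y) [set v]) ->
  (forall t w, Eset t -> St K t (X `&` Y) [set w] -> K [set v; w]) -> HQform v.
Proof.
move=> H1 H2; apply: extendQ => s Ks [x [sx Xx]] [y [sy Yy]].
have Ex : Eset [set x; y] by apply: E_xy => //; exact: (sub2 Ks sx sy).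
have Av : (X `&` Y) v by case: (H1 _ Ex) => /(_ v erefl).
split => // w sw; have [Xw|[Yw|Aw]] := split3 Ks sw.
- have Ew : Eset [set w; y] by apply: E_xy => //; exact: (sub2 Ks sw sy).
  have [_ [_ [_ Kt]]] := H1 _ Ew.
  apply: (csub Kt); first by move=> u [->|->]; [left|right; left].
  by exists v; left.
- have Ew : Eset [set x; w] by apply: E_xy => //; exact: (sub2 Ks sx sw).
  have [_ [_ [_ Kt]]] := H1 _ Ew.
  apply: (csub Kt); first by move=> u [->|->]; [left|right; right].
  by exists v; left.
- apply: (H2 _ _ Ex); split; first by move=> u ->.
  split; first by exists w.
  split; first exact: finite_set1.
  apply: (csub Ks); first by move=> u [->|[->|->]].
  by exists w; left.
Qed.

Lemma case2 v : (forall t, Eset t -> St K t (X `&` Y) [set v]) ->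
  (forall t, Eset t -> central_vertex (St K t (X `&` Y)) v) -> HQform v.
Proof.
move=> H1 H2; apply: case1 => // t w Et Sw.
have [_ [_ [_ Kt]]] := H2 t Et _ Sw.
apply: (csub Kt); first by move=> u [->|->]; left; [right|left].
by exists v; left.
Qed.

Lemma case3 v : (X `&` Y) v ->
  (forall t, K t -> is_singleton (t `&` XA) -> is_singleton (t `&` YA) ->
     at_most_one (t `&` (X `&` Y)) -> K (t `|` [set v])) -> HQform v.
Proof.
move=> Av H; apply: extendQ => s Ks [x [sx Xx]] [y [sy Yy]].
split => // w sw.
have key : forall a b, XA a -> YA b -> s a -> s b -> (w = a \/ w = b \/ (X `&` Y) w) ->
    K [set v; w].
  move=> a b Xa Yb sa sb hw.
  have Kt : K [set a; b; w].
    apply: (csub Ks); first by move=> u [[->|->]|->].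
    by exists a; left; left.
  have nAa : ~ (X `&` Y) a by case: Xa.
  have nAb : ~ (X `&` Y) b by case: Yb.
  have Kt' : K ([set a; b; w] `|` [set v]).
  apply: (H _ Kt).
  - exists a; apply/seteqP; split => u.
      move=> [[[->|->]|->] Xu] //=.
        by exfalso; exact: (XAnYA Xu Yb).
      case: hw => [->//|[ebw|Aw]].
        by exfalso; rewrite ebw in Xu; exact: (XAnYA Xu Yb).
      by case: Xu => _.
    by move=> /= ->; split => //; left; left.
  - exists b; apply/seteqP; split => u.
      move=> [[[->|->]|->] Yu] //=.
        by exfalso; exact: (XAnYA Xa Yu).
      case: hw => [eaw|[->//|Aw]].
        by exfalso; rewrite eaw in Yu; exact: (XAnYA Xa Yu).
      by case: Yu => _.
    by move=> /= ->; split => //; left; right.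
  - move=> u u' [[[->|->]|->] Au] // [[[->|->]|->] Au'] //.
  apply: (csub Kt'); first by move=> u [->|->]; [right|left; right].
  by exists v; left.
have [Xw|[Yw|Aw]] := split3 Ks sw.
- by apply: (key w y) => //; left.
- by apply: (key x w) => //; right; left.
- by apply: (key x y) => //; right; right.
Qed.

End Comb.


Theorem proposition9p5 (R : realType) (V : choiceType) (K : set (set V))
  (X Y : set V) :
  simplicial_complex K -> clique K ->
  X `|` Y = vertices K ->
  let A := X `&` Y in
  let P := [set s | K s /\ (s `<=` X \/ s `<=` Y \/ s `&` A !=set0)] in
  let E := edges K `\` P in
  ((exists v : V,
      (forall t, E t -> St K t A [set v]) /\
      (forall t w, E t -> St K t A [set w] -> K [set v; w])) \/
   (exists v : V,
      (forall t, E t -> St K t A [set v]) /\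
      (forall t, E t -> central_vertex (St K t A) v)) \/
   (exists2 v : V, A v &
      forall t, K t -> is_singleton (t `&` (X `\` A)) ->
        is_singleton (t `&` (Y `\` A)) -> at_most_one (t `&` A) ->
        K (t `|` [set v]))) ->
  incl_weak_equivalence R (full_sub K X `|` full_sub K Y) K.
Proof.
move=> HK Hcl HXY A P E H.
case: H => [[v [H1 H2]]|[[v [H1 H2]]|[v Av H3]]].
- exact: (@weq R V K X Y v HK HXY (@case1 V K X Y HK Hcl HXY v H1 H2)).
- exact: (@weq R V K X Y v HK HXY (@case2 V K X Y HK Hcl HXY v H1 H2)).
- exact: (@weq R V K X Y v HK HXY (@case3 V K X Y HK Hcl HXY v Av H3)).
Qed.
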